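(* Consider the setting described in the context, assume A1–A5, and let $s=\frac{r}{2-4r}$. For any constants $c>0$ and $C>0$ there is $\gamma>0$ such that, whenever $f_n=\sum_{j=1}^{ck_n}\theta_{nj}\phi_j$ and $\|f_n\|\le Cn^{-r}$, one has $f_n\in\bar{\mathbb{B}}^s_{2\infty}(\gamma)$.
   Context: Fix $\sigma>0$, $0<r<1/2$ and an orthonormal basis $(\phi_j)_{j\ge1}$ of $\mathbb{L}_2(0,1)$. For each $n$ nonnegative weights $\kappa_{nj}^2$ are given with $\rho_n=\sum_j\kappa_{nj}^2<\infty$; $k_n=\sup\{k:\sum_{j<k}\kappa_{nj}^2\le\rho_n/2\}$ and $\kappa_n^2=\kappa_{nk_n}^2$. Assumptions: (A1) $j\mapsto\kappa_{nj}^2$ decreasing; (A2) $C_1<\sigma^{-4}n^2\sum_j\kappa_{nj}^4<C_2$ for all $n$; (A3) $c_1n^{-2r}\le\rho_n\le c_2n^{-2r}$; (A4) $\exists C_1>0,\lambda>1$: $\kappa^2_{n,[(1+\delta)k_n]}<C_1(1+\delta)^{-\lambda}\kappa_n^2$ for all $\delta>0,n$; (A5) $\kappa_{n1}^2\asymp\kappa_n^2$ and for each $c>1$ there is $C>0$ with $\kappa^2_{n,[ck_n]}\ge C\kappa_n^2$. $\bar{\mathbb{B}}^s_{2\infty}(P_0)=\{f=\sum_j\theta_j\phi_j:\ \sup_{\lambda>0}\lambda^{2s}\sum_{j>\lambda}\theta_j^2\le P_0\}$. *)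

(* Defs.v *)
From HB Require Import structures.
From mathcomp Require Import all_boot all_order all_algebra.
From mathcomp Require Import all_classical all_reals all_analysis.
Set Implicit Arguments. Unset Strict Implicit. Unset Printing Implicit Defensive.
Import Order.TTheory GRing.Theory Num.Theory.
Import numFieldNormedType.Exports.
Local Open Scope ring_scope.

Section Defs.
Variable R : realType.

(* partial sums over indices 1 <= j < N (sequences are indexed from j = 1;
   the value at j = 0 is never used) *)
Definition psum (a : nat -> R) (N : nat) : R := \sum_(1 <= j < N) a j.

Definition ssum (a : nat -> R) : R := limn (psum a).

(* rho_n = sum_j kappa_{nj}^2 ; kappa2 n j stands for kappa_{nj}^2 *)
Definition rho (kappa2 : nat -> nat -> R) (n : nat) : R := ssum (kappa2 n).

Definition is_kn (kappa2 : nat -> nat -> R) (n k : nat) : Prop :=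
  psum (kappa2 n) k <= rho kappa2 n / 2 /\
  forall k' : nat, psum (kappa2 n) k' <= rho kappa2 n / 2 -> (k' <= k)%N.

(* L2 norm of f = sum_j theta_j phi_j, via Parseval *)
Definition l2norm (theta : nat -> R) : R := Num.sqrt (ssum (fun j => theta j ^+ 2)).

Definition tail (theta : nat -> R) (lam : R) : R :=
  limn (fun N => \sum_(1 <= j < N | lam < j%:R) theta j ^+ 2).

(* f = sum_j theta_j phi_j belongs to \bar B^s_{2 infty}(P0) *)
Definition besov_ball (s P0 : R) (theta : nat -> R) : Prop :=
  forall lam : R, 0 < lam -> lam `^ (2 * s) * tail theta lam <= P0.

End Defs.

(* Main.v *)
Require Import Defs.
From HB Require Import structures.
From mathcomp Require Import all_boot all_order all_algebra.
From mathcomp Require Import all_classical all_reals all_analysis.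
From mathcomp Require Import lra ring zify.
Import Order.TTheory GRing.Theory Num.Theory.
Import numFieldNormedType.Exports.
Local Open Scope ring_scope.

Lemma sum_cst_after (R : realType) (a : nat -> R) (P : pred nat) (M N : nat) :
  (forall j, (M < j)%N -> a j = 0) -> (M.+1 <= N)%N ->
  \sum_(1 <= j < N | P j) a j = \sum_(1 <= j < M.+1 | P j) a j.
Proof.
move=> ha hN; rewrite (@big_cat_nat _ _ _ M.+1 1 N _ _ isT hN) /=.
rewrite [X in _ + X]big1_seq ?addr0 // => j /andP[_].
by rewrite mem_index_iota => /andP[hj _]; apply: ha.
Qed.

Lemma limn_cst_after (R : realType) (a : nat -> R) (P : pred nat) (M : nat) :
  (forall j, (M < j)%N -> a j = 0) ->
  limn (fun N => \sum_(1 <= j < N | P j) a j) = \sum_(1 <= j < M.+1 | P j) a j.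
Proof.
move=> ha; apply: cvg_lim => //; apply: cvg_near_cst; near=> N; apply: sum_cst_after => //.
near: N; exact: nbhs_infty_ge.
Unshelve. all: by end_near.
Qed.

Lemma psum_nd (R : realType) (a : nat -> R) :
  (forall j, 0 <= a j) -> nondecreasing_seq (psum a).
Proof.
move=> ha N N' hNN'; rewrite /psum.
case: (leqP N 1) => hN1.
  rewrite [X in X <= _]big_geq //; exact: sumr_ge0.
rewrite (@big_cat_nat _ _ _ N 1 N' _ _ (ltnW hN1) hNN') /= lerDl; exact: sumr_ge0.
Qed.

Theorem lemma3 (R : realType) (sigma r : R) (kappa2 : nat -> nat -> R)
  (k : nat -> nat)
  (hsigma : 0 < sigma) (hr0 : 0 < r) (hr1 : r < 1 / 2)
  (hnonneg : forall n j, 0 <= kappa2 n j)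
  (hsumm : forall n, cvgn (psum (kappa2 n)))
  (hk : forall n, (1 <= n)%N -> is_kn kappa2 n (k n))
  (* A1 *)
  (A1 : forall n j j', (1 <= n)%N -> (1 <= j)%N -> (j <= j')%N ->
          kappa2 n j' <= kappa2 n j)
  (* A2 *)
  (A2 : exists C1 C2 : R, 0 < C1 /\ 0 < C2 /\ forall n, (1 <= n)%N ->
          C1 < sigma ^- 4 * (n%:R) ^+ 2 * ssum (fun j => kappa2 n j ^+ 2) /\
          sigma ^- 4 * (n%:R) ^+ 2 * ssum (fun j => kappa2 n j ^+ 2) < C2)
  (* A3 *)
  (A3 : exists c1 c2 : R, 0 < c1 /\ 0 < c2 /\ forall n, (1 <= n)%N ->
          c1 * (n%:R) `^ (- (2 * r)) <= rho kappa2 n /\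
          rho kappa2 n <= c2 * (n%:R) `^ (- (2 * r)))
  (* A4 *)
  (A4 : exists C1 lam : R, 0 < C1 /\ 1 < lam /\
          forall (delta : R) n, 0 < delta -> (1 <= n)%N ->
          kappa2 n (Num.truncn ((1 + delta) * (k n)%:R))
            < C1 * (1 + delta) `^ (- lam) * kappa2 n (k n))
  (* A5 *)
  (A5a : exists a b : R, 0 < a /\ 0 < b /\ forall n, (1 <= n)%N ->
          a * kappa2 n (k n) <= kappa2 n 1%N /\ kappa2 n 1%N <= b * kappa2 n (k n))
  (A5b : forall c : R, 1 < c -> exists C : R, 0 < C /\ forall n, (1 <= n)%N ->
          C * kappa2 n (k n) <= kappa2 n (Num.truncn (c * (k n)%:R))) :
  let s := r / (2 - 4 * r) in
  forall c C : R, 0 < c -> 0 < C ->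
  exists gamma : R, 0 < gamma /\
    forall (n : nat) (theta : nat -> R), (1 <= n)%N ->
      (forall j : nat, c * (k n)%:R < j%:R -> theta j = 0) ->
      l2norm theta <= C * (n%:R) `^ (- r) ->
      besov_ball s gamma theta.

Proof.
move=> s c C hc hC.
have [C1 [C2 [hC1 [hC2 hA2]]]] := A2.
have [c1 [c2 [hc1 [hc2 hA3]]]] := A3.
have [a [b [ha [hb hA5]]]] := A5a.
pose K0 := sigma ^- 4 * b * c2 ^+ 2 / (2 * C1).
have hs : 0 < s by rewrite /s divr_gt0 // subr_gt0; lra.
have kbound : forall n, (1 <= n)%N ->
    (k n)%:R <= (K0 + 1) * (n%:R) `^ (2 + - (2 * r) + - (2 * r)).
  move=> n hn.
  have hm : 1 <= n%:R :> R by rewrite ler1n.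
  have hm0 : n%:R != 0 :> R by rewrite pnatr_eq0 -lt0n.
  set m : R := n%:R in hm hm0 *.
  set P := m `^ (- (2 * r)).
  have hP : 0 <= P by apply: powR_ge0.
  have [hrl hru] := hA3 n hn.
  set rh := rho kappa2 n in hrl hru.
  have [hA2l _] := hA2 n hn.
  set S4 := ssum (fun j => kappa2 n j ^+ 2) in hA2l.
  have [_ hb1] := hA5 n hn.
  have [hkn _] := hk n hn.
  rewrite -/rh in hkn.
  have hrho : forall N, psum (kappa2 n) N <= rh.
    by move=> N; apply: nondecreasing_cvgn_le => //; apply: psum_nd.
  have h4N : forall N, psum (fun j => kappa2 n j ^+ 2) N <= kappa2 n 1%N * psum (kappa2 n) N.
    move=> N; rewrite /psum big_distrr /=; apply: ler_sum_nat => j /andP[hj _].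
    rewrite expr2; apply: ler_wpM2r => //; exact: A1.
  have hk1 : 0 <= kappa2 n 1%N := hnonneg n 1%N.
  have cvg4 : cvgn (psum (fun j => kappa2 n j ^+ 2)).
    apply: nondecreasing_is_cvgn.
      by apply: psum_nd => j; apply: sqr_ge0.
    exists (kappa2 n 1%N * rh) => _ [N _ <-].
    by apply: (le_trans (h4N N)); apply: ler_wpM2l.
  have hS4 : S4 <= kappa2 n 1%N * rh.
    apply: limr_le => //; apply: nearW => N.
    by apply: (le_trans (h4N N)); apply: ler_wpM2l.
  have hkq : ((k n - 1)%:R) * kappa2 n (k n) <= rh / 2.
    apply: le_trans hkn; rewrite /psum mulr_natl -sumr_const_nat.
    apply: ler_sum_nat => j /andP[hj hj2]; apply: A1 => //; exact: ltnW.
  have hrh0 : 0 <= rh by apply: le_trans hrl; rewrite mulr_ge0 // ltW.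
  have hq : 0 <= kappa2 n (k n) := hnonneg n (k n).
  set q := kappa2 n (k n) in hb1 hkq hq *.
  set x : R := (k n - 1)%:R in hkq *.
  have hx : 0 <= x by rewrite /x ler0n.
  set sg := sigma ^- 4 in hA2l *.
  have hsg : 0 <= sg by rewrite /sg invr_ge0 exprn_ge0 // ltW.
  set M2 := m ^+ 2 in hA2l *.
  have hM2 : 0 <= M2 by rewrite /M2 sqr_ge0.
  have e1 : x * C1 <= x * (sg * M2 * S4) by apply: ler_wpM2l => //; apply: ltW.
  have e2 : sg * M2 * S4 <= sg * M2 * (b * q * rh).
    apply: ler_wpM2l; first by rewrite mulr_ge0.
    apply: (le_trans hS4); apply: ler_wpM2r => //.
  have e3 : x * (sg * M2 * (b * q * rh)) = (sg * M2 * b * rh) * (x * q) by ring.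
  have e4 : (sg * M2 * b * rh) * (x * q) <= (sg * M2 * b * rh) * (rh / 2).
    by apply: ler_wpM2l => //; rewrite !mulr_ge0 // ltW.
  have e5 : rh * rh <= (c2 * P) * (c2 * P) by apply: ler_pM.
  have e6 : (sg * M2 * b) * (rh * rh) <= (sg * M2 * b) * ((c2 * P) * (c2 * P)).
    by apply: ler_wpM2l => //; rewrite !mulr_ge0 // ltW.
  have e7 : x * C1 <= sg * M2 * b * (c2 * P) * (c2 * P) / 2.
    have e1' := ler_wpM2l hx e2.
    have E1 : sg * M2 * b * (c2 * P) * (c2 * P) / 2 = (sg * M2 * b) * ((c2 * P) * (c2 * P)) / 2 by ring.
    have E2 : (sg * M2 * b * rh) * (rh / 2) = (sg * M2 * b) * (rh * rh) / 2 by ring.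
    lra.
  have e8 : x <= K0 * (M2 * P * P).
    have -> : K0 * (M2 * P * P) = (sg * M2 * b * (c2 * P) * (c2 * P) / 2) / C1.
      rewrite /K0 -/sg; field; lra.
    by rewrite ler_pdivlMr.
  have hT : m `^ (2 + - (2 * r) + - (2 * r)) = M2 * P * P.
    by rewrite /P /M2 -(powR_mulrn 2) // -!powRD ?hm0 ?implybT.
  have hT1 : 1 <= M2 * P * P.
    rewrite -hT; have := @ler_powR _ m hm 0 (2 + - (2 * r) + - (2 * r)).
    rewrite powRr0; apply; lra.
  rewrite hT.
  have hkx : (k n)%:R <= x + 1 by rewrite /x natr1 ler_nat subn1 leqSpred.
  apply: (le_trans hkx); rewrite mulrDl mul1r; exact: lerD.
set G := (c * (K0 + 1)) `^ (2 * s) * C ^+ 2.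
have hG : 0 <= G by rewrite /G mulr_ge0 ?powR_ge0 ?sqr_ge0.
exists (G + 1); split; first lra.
move=> n theta hn hth hl lam hlam.
have hck : 0 <= c * (k n)%:R by rewrite mulr_ge0 // ltW.
set M := Num.truncn (c * (k n)%:R).
have hth' : forall j, (M < j)%N -> theta j ^+ 2 = 0.
  move=> j hj; rewrite hth ?expr0n //; by rewrite -truncn_lt_nat.
have Etail : tail theta lam = \sum_(1 <= j < M.+1 | lam < j%:R) theta j ^+ 2 :=
  @limn_cst_after R (fun j => theta j ^+ 2) (fun j => lam < j%:R) M hth'.
have Essum : ssum (fun j => theta j ^+ 2) = \sum_(1 <= j < M.+1) theta j ^+ 2 :=
  @limn_cst_after R (fun j => theta j ^+ 2) (fun _ => true) M hth'.
rewrite /besov_ball Etail.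
have h2s : 0 <= 2 * s by lra.
case: (leP (c * (k n)%:R) lam) => hcl.
  rewrite big1 ?mulr0; first lra.
  move=> j hj; rewrite hth ?expr0n //; exact: le_lt_trans hj.
have hkb := kbound n hn.
have hm : 1 <= n%:R :> R by rewrite ler1n.
have hm0 : n%:R != 0 :> R by rewrite pnatr_eq0 -lt0n.
set m : R := n%:R in hkb hl hm hm0 *.
set T := m `^ (2 + - (2 * r) + - (2 * r)) in hkb.
set Q := m `^ (- r) in hl.
set S := \sum_(1 <= j < M.+1) theta j ^+ 2 in Essum.
have hS0 : 0 <= S by apply: sumr_ge0 => j _; exact: sqr_ge0.
have hSb : S <= (C * Q) ^+ 2.
  move: hl; rewrite /l2norm Essum => hl.
  rewrite -(sqr_sqrtr hS0) !expr2; apply: ler_pM => //; exact: sqrtr_ge0.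
have htail : \sum_(1 <= j < M.+1 | lam < j%:R) theta j ^+ 2 <= S.
  rewrite [X in X <= _]big_mkcond /=; apply: ler_sum_nat => j _.
  case: ifP => _ //; exact: sqr_ge0.
have htail0 : 0 <= \sum_(1 <= j < M.+1 | lam < j%:R) theta j ^+ 2.
  by apply: sumr_ge0 => j _; exact: sqr_ge0.
have hK0 : 0 <= K0.
  rewrite /K0; apply: divr_ge0; last by rewrite mulr_ge0 // ltW.
  rewrite mulr_ge0 ?sqr_ge0 // mulr_ge0 ?(ltW hb) //.
  by rewrite invr_ge0 exprn_ge0 // ltW.
have hT0 : 0 <= T by apply: powR_ge0.
have hp1 : lam `^ (2 * s) <= (c * (k n)%:R) `^ (2 * s).
  by apply: ge0_ler_powR => //; rewrite ?nnegrE // ltW.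
have hp2 : (c * (k n)%:R) `^ (2 * s) <= (c * (K0 + 1) * T) `^ (2 * s).
  apply: ge0_ler_powR => //; rewrite ?nnegrE //.
    by rewrite !mulr_ge0 // ?ltW //; lra.
  by rewrite -mulrA; apply: ler_wpM2l => //; exact: ltW.
have hT2 : T `^ (2 * s) * Q * Q = 1.
  have Ee : (2 + - (2 * r) + - (2 * r)) * (2 * s) = 2 * r.
    rewrite /s; field; lra.
  rewrite /T /Q -powRrM Ee -!powRD ?hm0 ?implybT //.
  by rewrite (_ : 2 * r + - r + - r = 0) ?powRr0 //; ring.
have hcK : (c * (K0 + 1) * T) `^ (2 * s) = (c * (K0 + 1)) `^ (2 * s) * T `^ (2 * s).
  by rewrite powRM // mulr_ge0 // ?ltW //; lra.
have hfin : lam `^ (2 * s) * \sum_(1 <= j < M.+1 | lam < j%:R) theta j ^+ 2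
    <= (c * (K0 + 1) * T) `^ (2 * s) * (C * Q) ^+ 2.
  apply: ler_pM => //; first exact: powR_ge0.
    exact: le_trans hp1 hp2.
  exact: le_trans htail hSb.
have EG : (c * (K0 + 1) * T) `^ (2 * s) * (C * Q) ^+ 2 = G.
  rewrite hcK /G; transitivity ((c * (K0 + 1)) `^ (2 * s) * C ^+ 2 * (T `^ (2 * s) * Q * Q)); first by ring.
  by rewrite hT2 mulr1.
lra.
Qed.
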